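(* Let $q\ge 1$, $n\ge1$ and $\theta\ge 1$ be integers, and let $X=(X_1,\dots,X_n)$ be a random vector with values in $[q]^n$. Let $\sigma$ be a uniformly random permutation of $[n]$, independent of $X$. Then $$\mathbb E_{X,\sigma}\left[\sum_{i=\theta}^n \mathrm{TV}\Big(\big(X_{\sigma(i)}\mid \{X_{\sigma(j)}\}_{j\in[i-\theta]}\big),\ \big(X_{\sigma(i)}\mid \{X_{\sigma(j)}\}_{j\in[i-1]}\big)\Big)^2\right]\le \frac{(\theta-1)\log q}{2}.$$
   Context: $\mathrm{TV}$ is total variation distance and $\log$ is the natural logarithm. For a set $J$ of indices, $(X_k\mid\{X_j\}_{j\in J})$ denotes the conditional law of $X_k$ given the values of $(X_j)_{j\in J}$, evaluated at the realized values of $X$ (so it is a random distribution on $[q]$); $[0]=\emptyset$. *)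

(* Defs.v *)
From HB Require Import structures.
From mathcomp Require Import all_boot all_order all_algebra all_fingroup.
From mathcomp Require Import reals exp.
Set Implicit Arguments. Unset Strict Implicit. Unset Printing Implicit Defensive.
Import Order.TTheory GRing.Theory Num.Theory.
Local Open Scope ring_scope.

(* The random vector X in [q]^n is given by its law
   p : {ffun {ffun 'I_n -> 'I_q} -> R}, a probability mass function on [q]^n.
   Coordinates are 0-based: 'I_n = {0,...,n-1}, 'I_q = {0,...,q-1}. *)

Definition is_pmf (R : realType) (T : finType) (p : {ffun T -> R}) : Prop :=
  (forall x, 0 <= p x) /\ \sum_(x : T) p x = 1.

Definition agree (n q : nat) (J : {set 'I_n}) (x y : {ffun 'I_n -> 'I_q}) : bool :=
  [forall j in J, y j == x j].

(* Conditional law of X_k given (X_j)_{j in J}, evaluated at the realized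
   values x:  a |-> P(X_k = a, X_J = x_J) / P(X_J = x_J).
   (When P(X_J = x_J) = 0 this is 0 by MathComp's convention 0^-1 = 0; such x
   have probability zero and do not contribute to expectations.) *)
Definition cond_law (R : realType) (n q : nat) (p : {ffun {ffun 'I_n -> 'I_q} -> R})
    (J : {set 'I_n}) (k : 'I_n) (x : {ffun 'I_n -> 'I_q}) (a : 'I_q) : R :=
  (\sum_(y | agree J x y && (y k == a)) p y) / (\sum_(y | agree J x y) p y).

Definition TV (R : realType) (q : nat) (mu nu : 'I_q -> R) : R :=
  (\sum_(a : 'I_q) `|mu a - nu a|) / 2.

(* The set {sigma(j) : j in [m]} (1-based), i.e. images of 0-based positions < m. *)
Definition first_pos (n : nat) (s : {perm 'I_n}) (m : nat) : {set 'I_n} :=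
  [set s j | j in [set j : 'I_n | (j < m)%N]].

(* The 1-based index i
   corresponds to the 0-based position k = i - 1, so i ranges over theta..n
   iff k ranges over theta-1..n-1, [i-theta] = positions < k+1-theta and
   [i-1] = positions < k. *)
Definition TVsum (R : realType) (n q theta : nat) (p : {ffun {ffun 'I_n -> 'I_q} -> R})
    (s : {perm 'I_n}) (x : {ffun 'I_n -> 'I_q}) : R :=
  \sum_(k < n | (theta.-1 <= k)%N)
     (TV (cond_law p (first_pos s (k.+1 - theta)) (s k) x)
         (cond_law p (first_pos s k) (s k) x)) ^+ 2.

Definition expected_TVsum (R : realType) (n q theta : nat)
    (p : {ffun {ffun 'I_n -> 'I_q} -> R}) : R :=
  (#|{perm 'I_n}|%:R)^-1 *
    \sum_(s : {perm 'I_n}) \sum_(x : {ffun 'I_n -> 'I_q}) p x * TVsum theta p s x.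

(* Main.v *)
Require Import Defs.
From HB Require Import structures.
From mathcomp Require Import all_boot all_order all_algebra all_fingroup.
From mathcomp Require Import all_classical all_reals all_analysis.
From mathcomp Require Import ring lra.
Import Order.TTheory GRing.Theory Num.Theory.
Import numFieldNormedType.Exports.
Local Open Scope ring_scope.
Section S.
Variable R : realType.
Lemma is_deriveV' (f : R -> R) x (df : R) : f x != 0 -> is_derive x 1 f df ->
  is_derive x 1 (fun y => (f y)^-1) (- (f x) ^- 2 *: df).
Proof.
move=> fx0 H; apply: DeriveDef; first exact: derivableV.
by rewrite deriveV // derive_val.
Qed.

Definition rr (x : R) := (x - 1) * (5 * x + 1) * (2 * x * (x + 2))^-1.
Definition hh (x : R) := ln x - rr x.

Lemma hh_derive {x : R} : 0 < x -> is_derive x 1 hh ((x - 1) ^+ 3 / (x ^+ 2 * (x + 2) ^+ 2)).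
Proof.
move=> x0.
have dN : is_derive x 1 (fun y : R => (y - 1) * (5 * y + 1)) (10 * x - 4).
  by apply: is_derive_eq; rewrite /GRing.scale /=; ring.
have D0 : 2 * x * (x + 2) != 0.
  by rewrite !mulf_neq0 // ?lt0r_neq0 // ?ltr_wpDl //; lra.
have dD : is_derive x 1 (fun y : R => 2 * y * (y + 2)) (4 * x + 4).
  by apply: is_derive_eq; rewrite /GRing.scale /=; ring.
have dDV := @is_deriveV' (fun y : R => 2 * y * (y + 2)) x _ D0 dD.
have dr : is_derive x 1 rr ((x - 1) * (5 * x + 1) *: (- (2 * x * (x + 2)) ^- 2 *: (4 * x + 4))
          + (2 * x * (x + 2))^-1 *: (10 * x - 4)).
  exact: (is_deriveM dN dDV).
have dl := is_derive1_ln x0.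
have := is_deriveB dl dr.
have -> : ((@ln R) - rr) = hh by [].
move=> H; apply: is_derive_eq H _.
rewrite /GRing.scale /=.
have x0' : x != 0 by rewrite lt0r_neq0.
have x2 : x + 2 != 0 by rewrite lt0r_neq0 //; lra.
field.
by rewrite x0' x2.
Qed.

Lemma hh_cont (a b : R) : 0 < a -> {within `[a, b], continuous hh}%classic.
Proof.
move=> a0; apply: derivable_within_continuous => x.
rewrite in_itv /= => /andP[ax _].
have x0 : 0 < x by apply: lt_le_trans ax.
by have [] := hh_derive x0.
Qed.

Lemma hh_ge0 (t : R) : 0 < t -> 0 <= hh t.
Proof.
move=> t0.
have h1 : hh 1 = 0 by rewrite /hh /rr ln1 !subrr !mul0r subr0.
have [t1|t1] := leP 1 t.
  have [c + E] : exists2 c, c \in `[1, t]%R & hh t - hh 1 =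
      ((c - 1) ^+ 3 / (c ^+ 2 * (c + 2) ^+ 2)) * (t - 1).
    apply: MVT_segment => //; last exact: hh_cont.
    move=> x; rewrite in_itv /= => /andP[x1 _]; apply: hh_derive; lra.
  rewrite in_itv /= => /andP[c1 ct].
  suff : 0 <= hh t - hh 1 by rewrite h1 subr0.
  rewrite E; apply: mulr_ge0; last lra.
  apply: divr_ge0; first by apply: exprn_ge0; lra.
  by apply: mulr_ge0; apply: exprn_ge0; lra.
have [c + E] : exists2 c, c \in `[t, 1]%R & hh 1 - hh t =
    ((c - 1) ^+ 3 / (c ^+ 2 * (c + 2) ^+ 2)) * (1 - t).
  apply: MVT_segment; first lra; last exact: hh_cont.
  move=> x; rewrite in_itv /= => /andP[x1 _]; apply: hh_derive; lra.
rewrite in_itv /= => /andP[tc c1].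
suff : hh 1 - hh t <= 0 by rewrite h1 sub0r oppr_le0.
rewrite E; apply: mulr_le0_ge0; last lra.
apply: mulr_le0_ge0; last first.
  by rewrite invr_ge0; apply: mulr_ge0; apply: exprn_ge0; lra.
have : c - 1 <= 0 by lra.
move=> H; rewrite exprS; apply: mulr_le0_ge0 => //.
exact: sqr_ge0.
Qed.

Lemma ln_ge_rr {t : R} : 0 < t -> rr t <= ln t.
Proof. by move=> /hh_ge0; rewrite /hh subr_ge0. Qed.

Lemma pw_pinsker (a b : R) : 0 <= a -> 0 < b ->
  (a - b) ^+ 2 <= (2 * a / 3 + 4 * b / 3) * (a * ln (a / b) - a + b).
Proof.
move=> a0 b0; have [->|ap] := eqVneq a 0.
  rewrite !mul0r !add0r; nra.
have ap' : 0 < a by rewrite lt0r ap.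
have t0 : 0 < a / b by apply: divr_gt0.
have H := ln_ge_rr t0.
apply: (@le_trans _ _ ((2 * a / 3 + 4 * b / 3) * (a * rr (a / b) - a + b))).
  rewrite /rr.
  have b0' : b != 0 by rewrite lt0r_neq0.
  have e : (2 * a / 3 + 4 * b / 3) * (a * ((a / b - 1) * (5 * (a / b) + 1) *
     (2 * (a / b) * (a / b + 2))^-1) - a + b) = (a - b) ^+ 2.
    field; rewrite b0' ap /=.
    by rewrite andbT lt0r_neq0 //; lra.
  by rewrite e.
apply: ler_wpM2l; first lra.
by rewrite lerD2r lerD2r ler_wpM2l // ltW.
Qed.

Lemma cs_term (l d w k : R) : 0 < l -> 0 <= d -> 0 <= w -> 0 <= k ->
  d ^+ 2 <= w * k -> 2 * l * d <= l ^+ 2 * w + k.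
Proof.
move=> l0 d0 w0 k0 h.
have [w00|wp] := eqVneq w 0.
  rewrite w00 mul0r in h; have d00 : d = 0 by apply/eqP; rewrite -sqrf_eq0 eq_le h sqr_ge0.
  by rewrite d00 w00; nra.
have wp' : 0 < w by rewrite lt0r wp.
have : 0 <= w * (l ^+ 2 * w + k - 2 * l * d).
  have -> : w * (l ^+ 2 * w + k - 2 * l * d) = (l * w - d) ^+ 2 + (w * k - d ^+ 2) by ring.
  by apply: addr_ge0; [apply: sqr_ge0 | rewrite subr_ge0].
by rewrite pmulr_rge0 // subr_ge0.
Qed.

Lemma cs_sum (I : finType) (d w k : I -> R) : (forall i, 0 <= d i) ->
  (forall i, 0 <= w i) -> (forall i, 0 <= k i) -> (forall i, d i ^+ 2 <= w i * k i) ->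
  (\sum_i d i) ^+ 2 <= (\sum_i w i) * (\sum_i k i).
Proof.
move=> d0 w0 k0 h.
set S := \sum_i d i; set W := \sum_i w i; set K := \sum_i k i.
have S0 : 0 <= S by apply: sumr_ge0.
have W0 : 0 <= W by apply: sumr_ge0.
have K0 : 0 <= K by apply: sumr_ge0.
have key l : 0 < l -> 2 * l * S <= l ^+ 2 * W + K.
  move=> l0; rewrite /S /W /K mulr_sumr mulr_sumr -big_split /=.
  by apply: ler_sum => i _; apply: cs_term.
have [W00|Wp] := eqVneq W 0.
  have wi i : w i = 0.
    by move/eqP: W00; rewrite psumr_eq0 // => /allP/(_ i (mem_index_enum i))/implyP/(_ isT)/eqP.
  have di i : d i = 0 by have := h i; rewrite wi mul0r => hh; apply/eqP; rewrite -sqrf_eq0 eq_le hh sqr_ge0.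
  by rewrite /S big1 // expr0n /= mulr_ge0.
have Wp' : 0 < W by rewrite lt0r Wp.
have [S00|Sp] := eqVneq S 0; first by rewrite S00 expr0n /= mulr_ge0.
have Sp' : 0 < S by rewrite lt0r Sp.
have := key (S / W) (divr_gt0 Sp' Wp').
move=> H.
have e1 : 2 * (S / W) * S = 2 * (S ^+ 2 / W) by rewrite /=; field; rewrite Wp.
have e2 : (S / W) ^+ 2 * W = S ^+ 2 / W by field; rewrite Wp.
rewrite e1 e2 in H.
have : S ^+ 2 / W <= K by lra.
by rewrite ler_pdivrMr // mulrC.
Qed.

Lemma pinsker (q : nat) (P Q : 'I_q -> R) : (forall a, 0 <= P a) -> (forall a, 0 <= Q a) ->
  \sum_a P a = 1 -> \sum_a Q a = 1 -> (forall a, Q a = 0 -> P a = 0) ->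
  TV Q P ^+ 2 <= (\sum_a P a * ln (P a / Q a)) / 2.
Proof.
move=> P0 Q0 P1 Q1 ac.
have := @cs_sum _ (fun a => `|Q a - P a|) (fun a => 2 * P a / 3 + 4 * Q a / 3)
   (fun a => P a * ln (P a / Q a) - P a + Q a).
have term a : `|Q a - P a| ^+ 2 <= (2 * P a / 3 + 4 * Q a / 3) * (P a * ln (P a / Q a) - P a + Q a)
    /\ 0 <= P a * ln (P a / Q a) - P a + Q a.
  have [Qa0|Qap] := eqVneq (Q a) 0.
    rewrite Qa0 (ac _ Qa0) !mul0r subrr normr0 expr0n /= ?addr0 ?oppr0 ?mulr0 ?mul0r ?addr0; split => //; match goal with |- ?g => idtac g end; lra.
  have Qp : 0 < Q a by rewrite lt0r Qap Q0.
  have h := @pw_pinsker (P a) (Q a) (P0 a) Qp.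
  rewrite real_normK ?num_real // -(sqrrN) opprB; split => //.
  have wp : 0 < 2 * P a / 3 + 4 * Q a / 3 by have := P0 a; lra.
  by rewrite -(pmulr_rge0 _ wp); apply: le_trans h; apply: sqr_ge0.
move=> /(_ (fun a => normr_ge0 _)) /(_ _) /(_ _) /(_ _).
have w0 a : 0 <= 2 * P a / 3 + 4 * Q a / 3 by have := P0 a; have := Q0 a; lra.
move=> /(_ w0 (fun a => (term a).2) (fun a => (term a).1)).
have -> : \sum_i (2 * P i / 3 + 4 * Q i / 3) = 2.
  by rewrite big_split /= -!mulr_suml -!mulr_sumr P1 Q1; field.
have -> : \sum_i (P i * ln (P i / Q i) - P i + Q i) = \sum_a P a * ln (P a / Q a).
  by rewrite !big_split /= sumrN P1 Q1 subrK.
rewrite /TV => H.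
rewrite expr_div_n; lra.
Qed.
End S.
Section Cond.
Variables (R : realType) (n q : nat) (p : {ffun {ffun 'I_n -> 'I_q} -> R}).
Hypothesis p0 : forall x, 0 <= p x.
Local Notation T := {ffun 'I_n -> 'I_q}.
Implicit Types (J : {set 'I_n}) (x y z : T) (k : 'I_n) (a : 'I_q).

Definition Zc (J : {set 'I_n}) (x : T) : R := \sum_(y | agree J x y) p y.

Lemma agree_refl J x : agree J x x.
Proof. by apply/forallP => j; apply/implyP. Qed.

Lemma agree_sym J x y : agree J x y = agree J y x.
Proof.
by apply/forallP/forallP => h j; apply/implyP => hj; move/implyP: (h j) => /(_ hj); rewrite eq_sym.
Qed.

Lemma agree_sub J J' x y z : J \subset J' -> agree J' x y -> agree J x z = agree J y z.
Proof.
move=> sJ hxy; apply/forallP/forallP => h j; apply/implyP => hj;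
  move/implyP: (h j) => /(_ hj) H;
  (have /eqP e : y j == x j by move/forallP: hxy => /(_ j) /implyP; apply; exact: (fintype.subsetP sJ));
  by move: H; rewrite e.
Qed.

Lemma cond_law_agree J J' k x y : J \subset J' -> agree J' x y ->
  cond_law p J k x = cond_law p J k y.
Proof.
move=> sJ hxy; apply/funext => a; rewrite /cond_law.
by congr (_ / _); apply: eq_bigl => z; rewrite (agree_sub _ _ _ _ z sJ hxy).
Qed.

Lemma Zc_agree J x y : agree J x y -> Zc J x = Zc J y.
Proof. by move=> h; apply: eq_bigl => z; rewrite (agree_sub _ _ _ _ z (subxx J) h). Qed.

Lemma Zc_ge_p J x : p x <= Zc J x.
Proof.
rewrite /Zc (bigD1 x) ?agree_refl //= lerDl; apply: sumr_ge0 => y _; exact: p0.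
Qed.

Lemma Zc_ge0 J x : 0 <= Zc J x.
Proof. by apply: sumr_ge0 => y _; exact: p0. Qed.

Lemma cond_law_ge0 J k x a : 0 <= cond_law p J k x a.
Proof.
by apply: divr_ge0; [apply: sumr_ge0 => y _; exact: p0 | exact: Zc_ge0].
Qed.

Lemma cond_law_le1 J k x a : cond_law p J k x a <= 1.
Proof.
rewrite /cond_law; have [Z0|Zp] := eqVneq (Zc J x) 0.
  by rewrite /Zc in Z0; rewrite Z0 invr0 mulr0.
have Zp' : 0 < Zc J x by rewrite lt0r Zp Zc_ge0.
rewrite ler_pdivrMr // mul1r.
rewrite [X in _ <= X](bigID (fun y => y k == a)) /= lerDl.
by apply: sumr_ge0 => y _; exact: p0.
Qed.

Lemma sum_by_coord (k : 'I_n) (P : pred T) (G : T -> 'I_q -> R) :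
  \sum_a \sum_(y | P y && (y k == a)) G y a = \sum_(y | P y) G y (y k).
Proof.
rewrite (partition_big (fun y => y k) predT) //=.
apply: eq_bigr => a _; apply: eq_bigr => y /andP[_ /eqP ->] //.
Qed.

Lemma cond_law_sum1 J k x : 0 < p x -> \sum_a cond_law p J k x a = 1.
Proof.
move=> px; rewrite /cond_law -mulr_suml.
rewrite (sum_by_coord k (agree J x) (fun y _ => p y)).
by rewrite divff // lt0r_neq0 //; apply: lt_le_trans (Zc_ge_p J x).
Qed.

Lemma cond_law_pos J k x : 0 < p x -> 0 < cond_law p J k x (x k).
Proof.
move=> px; apply: divr_gt0; last by apply: lt_le_trans (Zc_ge_p J x).
rewrite (bigD1 x) /= ?agree_refl ?eqxx //.
apply: (lt_le_trans px); rewrite lerDl; apply: sumr_ge0 => y _; exact: p0.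
Qed.

Lemma cond_law_ac J J' k x a : J \subset J' -> 0 < p x ->
  cond_law p J k x a = 0 -> cond_law p J' k x a = 0.
Proof.
move=> sJ px; rewrite /cond_law => /eqP; rewrite mulf_eq0 invr_eq0.
have -> : (\sum_(y | agree J x y) p y == 0) = false.
  by apply/negbTE; rewrite lt0r_neq0 //; apply: lt_le_trans (Zc_ge_p J x).
rewrite orbF => /eqP N0.
suff -> : \sum_(y | agree J' x y && (y k == a)) p y = 0 by rewrite mul0r.
apply/eqP; rewrite eq_le sumr_ge0 ?andbT; last by move=> y _; exact: p0.
apply: (@le_trans _ _ (\sum_(y | agree J x y && (y k == a)) p y)); last by rewrite N0.
rewrite [X in _ <= X](bigID (fun y => agree J' x y)) /=.
have -> : \sum_(i | (agree J x i && (i k == a)) && agree J' x i) p i =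
          \sum_(y | agree J' x y && (y k == a)) p y.
  apply: eq_bigl => y; case h : (agree J' x y); rewrite ?andbF //=.
  rewrite andbT /=; case: (y k == a); rewrite ?andbT ?andbF //.
  apply/forallP => j; apply/implyP => hj.
  by move/forallP: h => /(_ j) /implyP /(_ (fintype.subsetP sJ _ hj)).
by rewrite lerDl; apply: sumr_ge0 => y _; exact: p0.
Qed.

Lemma tower J k (F : T -> 'I_q -> R) :
  (forall x y a, agree J x y -> F x a = F y a) ->
  \sum_x p x * \sum_a cond_law p J k x a * F x a = \sum_x p x * F x (x k).
Proof.
move=> hF.
transitivity (\sum_x \sum_(y | agree J x y) p y * (p x * F x (y k) / Zc J x)).
  apply: eq_bigr => x _; rewrite /cond_law.
  rewrite -(sum_by_coord k (agree J x) (fun y a => p y * (p x * F x a / Zc J x))).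
  rewrite big_distrr /=; apply: eq_bigr => a _.
  rewrite -mulr_suml /Zc; ring.
transitivity (\sum_x \sum_(y | agree J x y) p x * (p y * F y (y k) / Zc J y)).
  apply: eq_bigr => x _; apply: eq_bigr => y hxy.
  rewrite (hF x y _ hxy) (Zc_agree _ _ _ hxy); ring.
rewrite (exchange_big_dep predT) //=.
apply: eq_bigr => y _.
rewrite -mulr_suml.
have -> : \sum_(i | agree J i y) p i = Zc J y.
  by apply: eq_bigl => z; rewrite agree_sym.
have [Z0|Zp] := eqVneq (Zc J y) 0.
  have : p y = 0 by apply/eqP; rewrite eq_le p0 andbT -Z0 Zc_ge_p.
  by move=> ->; rewrite Z0 !mul0r.
field; by rewrite Zp.
Qed.
End Cond.
Section Ent.
Variable R : realType.
Lemma ln_le_sub1 (x : R) : 0 < x -> ln x <= x - 1.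
Proof.
move=> x0; have := @le_ln1Dx R (x - 1).
rewrite (_ : 1 + (x - 1) = x); last by ring.
by apply; lra.
Qed.

Lemma entropy_le (q : nat) (P : 'I_q -> R) : (forall a, 0 <= P a) -> \sum_a P a = 1 ->
  \sum_a P a * - ln (P a) <= ln (q%:R : R).
Proof.
move=> P0 P1.
have q0 : (0 < q)%N.
  case: q P P0 P1 => // P P0; rewrite big_ord0 => /eqP; rewrite eq_sym oner_eq0.
  done.
have qR : 0 < (q%:R : R) by rewrite ltr0n.
have term a : P a * - ln (P a) <= P a * ln (q%:R) + ((q%:R)^-1 - P a).
  have [->|Pa] := eqVneq (P a) 0.
    by rewrite !mul0r add0r subr0 invr_ge0 ltW.
  have Pp : 0 < P a by rewrite lt0r Pa P0.
  have h : ln ((q%:R * P a)^-1) <= (q%:R * P a)^-1 - 1.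
    by apply: ln_le_sub1; rewrite invr_gt0 mulr_gt0.
  rewrite lnV ?posrE ?mulr_gt0 // lnM ?posrE // in h.
  have : P a * (- (ln q%:R + ln (P a))) <= P a * ((q%:R * P a)^-1 - 1).
    by rewrite ler_wpM2l // ltW.
  have -> : P a * ((q%:R * P a)^-1 - 1) = (q%:R)^-1 - P a.
    by field; rewrite Pa /= lt0r_neq0.
  lra.
apply: le_trans (ler_sum _ (fun a _ => term a)) _.
rewrite big_split /= -mulr_suml P1 mul1r big_split /= sumrN P1 sumr_const card_ord.
rewrite -[X in _ + (X - _)]mulr_natr mulVf ?lt0r_neq0 // subrr addr0 //.
Qed.
End Ent.
Section Cond2.
Variables (R : realType) (n q : nat) (p : {ffun {ffun 'I_n -> 'I_q} -> R}).
Hypothesis p0 : forall x, 0 <= p x.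
Hypothesis p1 : \sum_x p x = 1.
Local Notation T := {ffun 'I_n -> 'I_q}.
Implicit Types (J : {set 'I_n}) (x y z : T) (k : 'I_n) (a : 'I_q).

Definition Hc J k : R := - \sum_x p x * ln (cond_law p J k x (x k)).

Lemma Hc_ge0 J k : 0 <= Hc J k.
Proof.
rewrite /Hc oppr_ge0; apply: sumr_le0 => x _.
by apply: mulr_ge0_le0 => //; apply: ln_le0; apply: cond_law_le1.
Qed.

Lemma Hc_le J k : Hc J k <= ln (q%:R : R).
Proof.
have e : Hc J k = \sum_x p x * \sum_a cond_law p J k x a * - ln (cond_law p J k x a).
  rewrite (@tower _ _ _ p p0 J k (fun x a => - ln (cond_law p J k x a))).
    by rewrite /Hc -sumrN; apply: eq_bigr => x _; rewrite mulrN.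
  by move=> x y a h; rewrite (@cond_law_agree _ _ _ p J J k x y (subxx J) h).
rewrite e; apply: (@le_trans _ _ (\sum_x p x * ln (q%:R : R))).
  apply: ler_sum => x _; have [->|px] := eqVneq (p x) 0; first by rewrite !mul0r.
  have pxp : 0 < p x by rewrite lt0r px p0.
  apply: ler_wpM2l => //; apply: entropy_le; first by move=> a; exact: cond_law_ge0.
  exact: cond_law_sum1.
by rewrite -mulr_suml p1 mul1r.
Qed.

Lemma KL_step J J' k : J \subset J' ->
  \sum_x p x * TV (cond_law p J k x) (cond_law p J' k x) ^+ 2 <= (Hc J k - Hc J' k) / 2.
Proof.
move=> sJ.
apply: (@le_trans _ _ (\sum_x p x * ((\sum_a cond_law p J' k x a *
      ln (cond_law p J' k x a / cond_law p J k x a)) / 2))).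
  apply: ler_sum => x _; have [->|px] := eqVneq (p x) 0; first by rewrite !mul0r.
  have pxp : 0 < p x by rewrite lt0r px p0.
  apply: ler_wpM2l => //; apply: pinsker.
  - by move=> a; exact: cond_law_ge0.
  - by move=> a; exact: cond_law_ge0.
  - exact: cond_law_sum1.
  - exact: cond_law_sum1.
  - by move=> a; exact: cond_law_ac.
under eq_bigr do rewrite mulrA.
rewrite -mulr_suml.
rewrite (@tower _ _ _ p p0 J' k (fun x a => ln (cond_law p J' k x a / cond_law p J k x a))); last first.
  move=> x y a h.
  by rewrite (@cond_law_agree _ _ _ p J' J' k x y (subxx J') h) (@cond_law_agree _ _ _ p J J' k x y sJ h).
apply: ler_wpM2r; first lra.
rewrite /Hc opprK addrC -sumrN -big_split /=; apply: ler_sum => x _.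
have [->|px] := eqVneq (p x) 0; first by rewrite !mul0r oppr0 addr0.
have pxp : 0 < p x by rewrite lt0r px p0.
rewrite ln_div ?posrE ?cond_law_pos //; lra.
Qed.
End Cond2.
Section Tele.
Variable R : realType.
Lemma tele_id (G : nat -> R) (a N : nat) :
  \sum_(m < N) (G m - G (m + a)%N) = \sum_(m < a) (G m - G (m + N)%N).
Proof.
elim: N => [|N IH].
  by rewrite big_ord0 big1 // => i _; rewrite addn0 subrr.
rewrite big_ord_recr /= IH.
have -> : \sum_(m < a) (G m - G (m + N.+1)%N) =
   \sum_(m < a) (G m - G (m + N)%N) + \sum_(m < a) (G (m + N)%N - G (m.+1 + N)%N).
  by rewrite -big_split /=; apply: eq_bigr => i _; rewrite addSnnS addnS; ring.
congr (_ + _).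
rewrite -(big_mkord xpredT (fun m => G (m + N)%N - G (m.+1 + N)%N)).
rewrite (eq_bigr (fun m => - G (m.+1 + N)%N - - G (m + N)%N)); last by move=> i _; ring.
rewrite (telescope_sumr (fun m => - G (m + N)%N)) // add0n addnC; ring.
Qed.

Lemma tele_bound (G : nat -> R) (c : R) (a n : nat) : (forall m, 0 <= G m <= c) ->
  \sum_(k < n | (a <= k)%N) (G (k - a)%N - G k) <= a%:R * c.
Proof.
move=> hG.
have c0 : 0 <= c by have /andP[h1 h2] := hG 0%N; apply: le_trans h2.
rewrite (eq_bigl (fun k : 'I_n => xpredT k && (a <= k)%N)) //.
rewrite -(big_geq_mkord a n xpredT (fun k => G (k - a)%N - G k)).
have [na|an] := leqP n a.
  by rewrite big_geq // mulr_ge0.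
rewrite -{1}[a]add0n big_addn.
rewrite (eq_bigr (fun m => G m - G (m + a)%N)); last by move=> i _; rewrite addnK.
rewrite big_mkord tele_id.
rewrite mulr_natl -[X in c *+ X]card_ord -sumr_const.
apply: ler_sum => i _.
have /andP[h1 h2] := hG i; have /andP[h3 h4] := hG (i + (n - a))%N; lra.
Qed.
End Tele.
Lemma first_pos_mono (n : nat) (s : {perm 'I_n}) (m m' : nat) : (m <= m')%N ->
  first_pos s m \subset first_pos s m'.
Proof.
move=> h; rewrite /first_pos; apply: imsetS; apply/fintype.subsetP => j.
by rewrite !inE => hj; apply: leq_trans hj h.
Qed.

Lemma exch (R : realType) (n : nat) (f : {set 'I_n} -> 'I_n -> R) (j : nat) (k k' : 'I_n) :
  (j <= k)%N -> (j <= k')%N ->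
  \sum_(s : {perm 'I_n}) f (first_pos s j) (s k) = \sum_(s : {perm 'I_n}) f (first_pos s j) (s k').
Proof.
move=> hk hk'.
rewrite (reindex_inj (mulgI (tperm k k'))) /=.
apply: eq_bigr => s _.
rewrite permM tpermL; congr f.
rewrite /first_pos; apply: eq_in_imset => i; rewrite inE => hi.
rewrite permM tpermD //; apply/eqP => e; move: hi; rewrite -e => hi.
  by move: (leq_trans hi hk); rewrite ltnn.
by move: (leq_trans hi hk'); rewrite ltnn.
Qed.

Theorem lemma2p5 (R : realType) (q n theta : nat)
    (hq : (1 <= q)%N) (hn : (1 <= n)%N) (htheta : (1 <= theta)%N)
    (p : {ffun {ffun 'I_n -> 'I_q} -> R}) (hp : is_pmf p) :
  expected_TVsum theta p <= (theta.-1)%:R * ln (q%:R : R) / 2.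
Proof.
case: hp => p0 p1.
case: n hn p p0 p1 => // n' _ p p0 p1.
set N := #|{perm 'I_n'.+1}|.
have Npos : 0 < (N%:R : R).
  by rewrite ltr0n; apply/card_gt0P; exists 1%g.
set a := theta.-1.
have tha : theta = a.+1 by rewrite /a prednK.
pose G (m : nat) : R := (N%:R)^-1 * \sum_(s : {perm 'I_n'.+1}) @Hc _ _ _ p (first_pos s m) (s (inord m)).
have Gb m : 0 <= G m <= ln (q%:R : R).
  apply/andP; split.
    apply: mulr_ge0; first by rewrite invr_ge0 ltW.
    by apply: sumr_ge0 => s _; apply: Hc_ge0.
  rewrite /G ler_pdivrMl //.
  apply: (@le_trans _ _ (\sum_(s : {perm 'I_n'.+1}) ln (q%:R : R))).
    by apply: ler_sum => s _; apply: Hc_le.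
  by rewrite sumr_const -/N mulr_natl.
rewrite /expected_TVsum /TVsum.
have -> : \sum_(s : {perm 'I_n'.+1}) \sum_(x : {ffun 'I_n'.+1 -> 'I_q}) p x *
    \sum_(k < n'.+1 | (theta.-1 <= k)%N)
      TV (cond_law p (first_pos s (k.+1 - theta)) (s k) x) (cond_law p (first_pos s k) (s k) x) ^+ 2
  = \sum_(k < n'.+1 | (theta.-1 <= k)%N) \sum_(s : {perm 'I_n'.+1}) \sum_(x : {ffun 'I_n'.+1 -> 'I_q}) p x *
      TV (cond_law p (first_pos s (k.+1 - theta)) (s k) x) (cond_law p (first_pos s k) (s k) x) ^+ 2.
  rewrite (eq_bigr (fun s => \sum_(x : {ffun 'I_n'.+1 -> 'I_q}) \sum_(k < n'.+1 | (theta.-1 <= k)%N) p x *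
      TV (cond_law p (first_pos s (k.+1 - theta)) (s k) x) (cond_law p (first_pos s k) (s k) x) ^+ 2)); last first.
    by move=> s _; apply: eq_bigr => x _; rewrite mulr_sumr.
  rewrite (eq_bigr (fun s => \sum_(k < n'.+1 | (theta.-1 <= k)%N) \sum_(x : {ffun 'I_n'.+1 -> 'I_q}) p x *
      TV (cond_law p (first_pos s (k.+1 - theta)) (s k) x) (cond_law p (first_pos s k) (s k) x) ^+ 2)); last first.
    by move=> s _; rewrite exchange_big.
  by rewrite exchange_big.
rewrite mulr_sumr.
apply: (@le_trans _ _ (\sum_(k < n'.+1 | (a <= k)%N) (G (k - a)%N - G k) / 2)); last first.
  rewrite -mulr_suml; apply: ler_wpM2r; first by rewrite invr_ge0.
  exact: tele_bound.
apply: ler_sum => k hk.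
have e1 : (k.+1 - theta)%N = (k - a)%N by rewrite tha subSS.
rewrite e1.
apply: (@le_trans _ _ ((N%:R)^-1 * \sum_(s : {perm 'I_n'.+1})
    (@Hc _ _ _ p (first_pos s (k - a)) (s k) - @Hc _ _ _ p (first_pos s k) (s k)) / 2)).
  apply: ler_wpM2l; first by rewrite invr_ge0 ltW.
  apply: ler_sum => s _; apply: KL_step => //.
  exact: first_pos_mono (leq_subr a k).
rewrite -mulr_suml sumrB.
have kan : (k - a < n'.+1)%N by apply: leq_ltn_trans (leq_subr a k) (ltn_ord k).
rewrite (@exch _ _ (fun J i => @Hc _ _ _ p J i) (k - a)%N k (inord (k - a)) (leq_subr a k)); last by rewrite inordK.
rewrite /G !inord_val -mulrBr !mulrA.
exact: lexx.
Qed.
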